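(* Let $G_1,G_2$ be $3$-edge colorable cubic graphs, and let $G_1\,Y\,G_2$ and $G_1\,H\,G_2$ be particular compositions of them. Let $c_1,c_2$ be proper $3$-edge colorings of $G_1$ and $d_1,d_2$ proper $3$-edge colorings of $G_2$. If $(c_1\,Y\,d_1)\sim(c_2\,Y\,d_2)$ in $G_1\,Y\,G_2$ (respectively $(c_1\,H\,d_1)\sim(c_2\,H\,d_2)$ in $G_1\,H\,G_2$), then $c_1\sim c_2$ in $G_1$ and $d_1\sim d_2$ in $G_2$.
   Context: Graphs are finite; multiple edges allowed, loops not. Proper $3$-edge colorings use colors $\{1,2,3\}$, adjacent edges receiving different colors. For colors $a\neq b$, an edge-Kempe chain is a connected component of the subgraph of edges colored $a$ or $b$; an edge-Kempe switch swaps $a,b$ on one chain; $\sim$ denotes equivalence under finite sequences of such switches. Composition Y: choose $v_1\in G_1$ with incident edges $x_j=v_1s_{1j}$ and $v_2\in G_2$ with incident edges $y_j=v_2s_{2j}$ ($j=1,2,3$); $G_1\,Y\,G_2$ deletes $v_1,v_2$ and adds edges $s_{1j}s_{2j}$. Composition H: choose edges $x=s_{11}s_{12}\in G_1$, $y=s_{21}s_{22}\in G_2$; $G_1\,H\,G_2$ deletes $x,y$ and adds $s_{11}s_{21},s_{12}s_{22}$. For proper $3$-edge colorings $c$ of $G_1$, $d$ of $G_2$: let $\hat d$ be obtained from $d$ by a global color permutation with $\hat d(y_j)=c(x_j)$; $c\,Y\,d$ colors $G_1-v_1$ by $c$, $G_2-v_2$ by $\hat d$, and $s_{1j}s_{2j}$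 by $c(x_j)$. Let $\tilde d$ be obtained from $d$ by a global color permutation with $\tilde d(y)=c(x)$; $c\,H\,d$ colors $G_1-x$ by $c$, $G_2-y$ by $\tilde d$, and both new edges by $c(x)$. *)

(* Defs.v *)
From HB Require Import structures.
From mathcomp Require Import all_boot fingroup perm.
Set Implicit Arguments. Unset Strict Implicit. Unset Printing Implicit Defensive.

(* A finite multigraph: each edge has an (ordered, but only used as an
   unordered pair) pair of distinct endpoints. *)
Record mgraph := MGraph {
  vert : finType;
  edge : finType;
  ends : edge -> vert * vert;
  loopless : forall e, (ends e).1 != (ends e).2 }.

Definition incident (G : mgraph) (v : vert G) (e : edge G) : bool :=
  ((ends e).1 == v) || ((ends e).2 == v).

Definition cubic (G : mgraph) : Prop :=
  forall v : vert G, #|[set e | incident v e]| = 3.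

Definition coloring (G : mgraph) := {ffun edge G -> 'I_3}.

Definition proper_coloring (G : mgraph) (c : coloring G) : Prop :=
  forall (e f : edge G) (v : vert G),
    e != f -> incident v e -> incident v f -> c e != c f.

Definition colorable3 (G : mgraph) : Prop := exists c : coloring G, proper_coloring c.

Definition kadj (G : mgraph) (c : coloring G) (a b : 'I_3) : rel (vert G) :=
  fun u w => [exists e, (c e \in [:: a; b]) &&
                        ((ends e == (u, w)) || (ends e == (w, u)))].

Definition kswitch (G : mgraph) (c : coloring G) (a b : 'I_3) (u : vert G)
  : coloring G :=
  [ffun e => if (c e \in [:: a; b]) && connect (kadj c a b) u (ends e).1
             then (if c e == a then b else a) else c e].

Inductive kequiv (G : mgraph) : coloring G -> coloring G -> Prop :=
| kequiv_refl c : kequiv c c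
| kequiv_step c (a b : 'I_3) (u : vert G) c' :
    a != b -> kequiv (kswitch c a b u) c' -> kequiv c c'.

Lemma notinc_neq1 (G : mgraph) (v : vert G) (e : edge G) :
  ~~ incident v e -> (ends e).1 != v.
Proof. by rewrite /incident negb_or => /andP[]. Qed.

Lemma notinc_neq2 (G : mgraph) (v : vert G) (e : edge G) :
  ~~ incident v e -> (ends e).2 != v.
Proof. by rewrite /incident negb_or => /andP[]. Qed.

Definition oend (G : mgraph) (v : vert G) (e : edge G) : vert G :=
  if (ends e).1 == v then (ends e).2 else (ends e).1.

Lemma oend_neq (G : mgraph) (v : vert G) (e : edge G) : oend v e != v.
Proof.
rewrite /oend; case: ifP => [/eqP He|/negbT //].
by rewrite -He eq_sym; apply: loopless.
Qed.

Section CompY.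
Variables (G1 G2 : mgraph) (v1 : vert G1) (v2 : vert G2).
Variables (x : 'I_3 -> edge G1) (y : 'I_3 -> edge G2).

Definition Yvert : finType :=
  ({u : vert G1 | u != v1} + {u : vert G2 | u != v2})%type.
Definition Yedge : finType :=
  (({e : edge G1 | ~~ incident v1 e} + {e : edge G2 | ~~ incident v2 e})
   + 'I_3)%type.

Definition Yends (ee : Yedge) : Yvert * Yvert :=
  match ee with
  | inl (inl e) =>
      (inl (exist _ (ends (val e)).1 (notinc_neq1 (valP e))),
       inl (exist _ (ends (val e)).2 (notinc_neq2 (valP e))))
  | inl (inr e) =>
      (inr (exist _ (ends (val e)).1 (notinc_neq1 (valP e))),
       inr (exist _ (ends (val e)).2 (notinc_neq2 (valP e))))
  | inr j =>
      (inl (exist _ (oend v1 (x j)) (oend_neq v1 (x j))),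
       inr (exist _ (oend v2 (y j)) (oend_neq v2 (y j))))
  end.

Lemma Yloopless ee : (Yends ee).1 != (Yends ee).2.
Proof.
case: ee => [[e|e]|j] //=.
- apply/negP => /eqP [] /eqP; exact/negP/loopless.
- apply/negP => /eqP [] /eqP; exact/negP/loopless.
Qed.

Definition Ygraph : mgraph := MGraph Yloopless.

(* f is the coloring c Y d: G1 - v1 colored by c, G2 - v2 by the (unique,
   when c,d are proper) global permutation p of d with p (d y_j) = c x_j,
   and the new edge s_{1j}s_{2j} by c x_j *)
Definition Ycol (c : coloring G1) (d : coloring G2) (f : coloring Ygraph)
  : Prop :=
  exists p : {perm 'I_3},
    (forall j, p (d (y j)) = c (x j)) /\
    (forall ee : Yedge, f ee = match ee with
                              | inl (inl e) => c (val e)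
                              | inl (inr e) => p (d (val e))
                              | inr j => c (x j)
                              end).
End CompY.

Section CompH.
Variables (G1 G2 : mgraph) (x : edge G1) (y : edge G2).
(* endpoint labelling: x = s11 s12, y = s21 s22 (checked in the theorem) *)
Variables (s11 s12 : vert G1) (s21 s22 : vert G2).

Definition Hvert : finType := (vert G1 + vert G2)%type.
Definition Hedge : finType :=
  (({e : edge G1 | e != x} + {e : edge G2 | e != y}) + bool)%type.

Definition Hends (ee : Hedge) : Hvert * Hvert :=
  match ee with
  | inl (inl e) => (inl (ends (val e)).1, inl (ends (val e)).2)
  | inl (inr e) => (inr (ends (val e)).1, inr (ends (val e)).2)
  | inr false => (inl s11, inr s21)
  | inr true => (inl s12, inr s22)
  end.

Lemma Hloopless ee : (Hends ee).1 != (Hends ee).2.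
Proof.
case: ee => [[e|e]|[|]] //=.
- apply/negP => /eqP [] /eqP; exact/negP/loopless.
- apply/negP => /eqP [] /eqP; exact/negP/loopless.
Qed.

Definition Hgraph : mgraph := MGraph Hloopless.

Definition Hcol (c : coloring G1) (d : coloring G2) (f : coloring Hgraph)
  : Prop :=
  exists p : {perm 'I_3},
    p (d y) = c x /\
    (forall ee : Hedge, f ee = match ee with
                              | inl (inl e) => c (val e)
                              | inl (inr e) => p (d (val e))
                              | inr _ => c x
                              end).
End CompH.

(* Main.v *)
Require Import Defs.
From mathcomp Require Import all_boot fingroup perm.
Set Implicit Arguments. Unset Strict Implicit. Unset Printing Implicit Defensive.

Section Gen.
Variable G : mgraph.
Implicit Types (c : coloring G) (a b k : 'I_3) (u v w : vert G) (e : edge G).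

Lemma kadj_sym c a b : symmetric (kadj c a b).
Proof.
move=> u w; apply/existsP/existsP => -[e /andP[H1 H2]]; exists e;
  by rewrite H1 orbC.
Qed.

Lemma kconnect_sym c a b : connect_sym (kadj c a b).
Proof. apply: sym_connect_sym; exact: kadj_sym. Qed.

Lemma kadj_ends c a b e : c e \in [:: a; b] -> kadj c a b (ends e).1 (ends e).2.
Proof. move=> H; apply/existsP; exists e; rewrite H /=; by case: (ends e) => ? ? /=; rewrite eqxx. Qed.

Lemma connect_inc c a b v e : c e \in [:: a; b] -> incident v e ->
  connect (kadj c a b) v (ends e).1.
Proof.
move=> Hc; rewrite /incident => /orP[/eqP<-|/eqP<-]; first exact: connect0.
apply: connect1; rewrite kadj_sym; exact: kadj_ends.
Qed.

Lemma connect_inc2 c a b v e : c e \in [:: a; b] -> incident v e ->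
  connect (kadj c a b) v (ends e).2.
Proof.
move=> Hc Hi; apply: connect_trans (connect_inc Hc Hi) (connect1 (kadj_ends Hc)).
Qed.

Lemma kswitch_mem c a b u e :
  (kswitch c a b u e \in [:: a; b]) = (c e \in [:: a; b]).
Proof.
rewrite /kswitch ffunE; case: ifP => // /andP[H _]; rewrite H.
by case: eqP; rewrite !inE eqxx ?orbT.
Qed.

Lemma kadj_kswitch c a b u : kadj (kswitch c a b u) a b =2 kadj c a b.
Proof. by move=> p q; rewrite /kadj; apply: eq_existsb => e; rewrite kswitch_mem. Qed.

Lemma kswitch_invol c a b u : kswitch (kswitch c a b u) a b u = c.
Proof.
apply/ffunP => e; rewrite {1}/kswitch ffunE kswitch_mem
  (eq_connect (kadj_kswitch c a b u)).
rewrite /kswitch ffunE; case H: (_ && _) => //; move: H => /andP[Hm _].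
move: Hm; rewrite !inE; case: (c e =P a) => [->|Hne] /=.
- case: (b =P a) => // ->.
- by rewrite eqxx => /eqP ->.
Qed.

Lemma kequiv_trans c1 c2 c3 : kequiv c1 c2 -> kequiv c2 c3 -> kequiv c1 c3.
Proof.
elim=> // c a b u c' Hab _ IH H; apply: kequiv_step Hab _; exact: IH.
Qed.

Lemma kequiv_sym c1 c2 : kequiv c1 c2 -> kequiv c2 c1.
Proof.
elim=> [c|c a b u c' Hab _ IH]; first exact: kequiv_refl.
apply: kequiv_trans IH _; apply: (kequiv_step (a:=a) (b:=b) (u:=u)) => //.
rewrite kswitch_invol; exact: kequiv_refl.
Qed.

Lemma kswitch_proper c a b u : proper_coloring c -> proper_coloring (kswitch c a b u).
Proof.
move=> Hp e f v Hef Hie Hif.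
have Hc := Hp e f v Hef Hie Hif.
have Hsw : c e \in [:: a; b] -> c f \in [:: a; b] ->
   connect (kadj c a b) u (ends e).1 = connect (kadj c a b) u (ends f).1.
  move=> He Hf; apply/idP/idP => Hu.
  - apply: connect_trans Hu _; apply: connect_trans _ (connect_inc Hf Hif).
    by rewrite kconnect_sym; exact: connect_inc.
  - apply: connect_trans Hu _; apply: connect_trans _ (connect_inc He Hie).
    by rewrite kconnect_sym; exact: connect_inc.
rewrite /kswitch !ffunE.
case He: (c e \in [:: a; b]); case Hf: (c f \in [:: a; b]) => //=.
- rewrite Hsw //; case: (connect _ u _) => //.
  move: He Hf Hc; rewrite !inE.
  move=> /orP[]/eqP-> /orP[]/eqP->; rewrite ?eqxx //;
  by case: (b =P a) => [->|/eqP Hba]; rewrite ?eqxx //= ?(negbTE Hba) // eq_sym.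
- case: (connect _ u _) => //; apply/eqP => Heq; move: Hf; rewrite -Heq.
  by case: eqP; rewrite !inE eqxx ?orbT.
- case: (connect _ u _) => //; apply/eqP => Heq; move: He; rewrite Heq.
  by case: eqP; rewrite !inE eqxx ?orbT.
Qed.

Lemma kequiv_proper c c' : kequiv c c' -> proper_coloring c -> proper_coloring c'.
Proof. elim=> // c0 a b u c1 _ _ IH H; apply: IH; exact: kswitch_proper. Qed.

Definition pcol (p : {perm 'I_3}) c : coloring G := [ffun e => p (c e)].

Lemma pcol_kswitch (p : {perm 'I_3}) c a b u :
  kswitch (pcol p c) (p a) (p b) u = pcol p (kswitch c a b u).
Proof.
have Hm : forall e, (p (c e) \in [:: p a; p b]) = (c e \in [:: a; b]).
  by move=> e; rewrite !inE !(inj_eq perm_inj).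
have Hk : kadj (pcol p c) (p a) (p b) =2 kadj c a b.
  by move=> q r; apply: eq_existsb => e; rewrite ffunE Hm.
apply/ffunP => e; rewrite /kswitch !ffunE (eq_connect Hk) Hm.
case: ifP => //; rewrite (inj_eq perm_inj); by case: eqP.
Qed.

Lemma kequiv_pcol (p : {perm 'I_3}) c c' : kequiv c c' -> kequiv (pcol p c) (pcol p c').
Proof.
elim=> [c0|c0 a b u c1 Hab _ IH]; first exact: kequiv_refl.
apply: (kequiv_step (a := p a) (b := p b) (u := u)).
  by rewrite (inj_eq perm_inj).
by rewrite pcol_kswitch.
Qed.

Definition swapc c a b (s : seq (vert G)) : coloring G :=
  [ffun e => if (c e \in [:: a; b]) && has (fun t => connect (kadj c a b) t (ends e).1) s
             then (if c e == a then b else a) else c e].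

Lemma swapc_equiv c a b s : a != b -> kequiv c (swapc c a b s).
Proof.
move=> Hab; elim: s => [|u s IH].
  have -> : swapc c a b [::] = c by apply/ffunP => e; rewrite ffunE andbF.
  exact: kequiv_refl.
apply: kequiv_trans IH _.
case Hu: (has (fun t => connect (kadj c a b) t u) s).
  have -> : swapc c a b (u :: s) = swapc c a b s; last exact: kequiv_refl.
  apply/ffunP => e; rewrite !ffunE /=.
  case: (c e \in _) => //=; case Hc: (connect _ u _) => //=.
  have -> // : has (fun t => connect (kadj c a b) t (ends e).1) s.
  move/hasP: Hu => [t Ht Htu]; apply/hasP; exists t => //; exact: connect_trans Htu Hc.
apply: (kequiv_step (a := a) (b := b) (u := u)) => //.
have Hm : forall e, (swapc c a b s e \in [:: a; b]) = (c e \in [:: a; b]).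
  move=> e; rewrite ffunE; case: ifP => // /andP[H _]; rewrite H.
  by case: eqP; rewrite !inE eqxx ?orbT.
have Hk : kadj (swapc c a b s) a b =2 kadj c a b.
  by move=> q r; apply: eq_existsb => e; rewrite Hm.
have -> : kswitch (swapc c a b s) a b u = swapc c a b (u :: s); last exact: kequiv_refl.
apply/ffunP => e; rewrite /kswitch ffunE (eq_connect Hk) Hm /swapc !ffunE /=.
case Hc: (c e \in _) => //=.
case Hue: (connect _ u _) => /=.
  have -> : has (fun t => connect (kadj c a b) t (ends e).1) s = false => //.
  apply/negbTE/negP => /hasP [t Ht Hte]; move/negbT: Hu => /hasP; apply.
  exists t => //; apply: connect_trans Hte _; by rewrite kconnect_sym.
by [].
Qed.

Lemma tperm_equiv c a b : a != b -> kequiv c (pcol (tperm a b) c).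
Proof.
move=> Hab; have -> : pcol (tperm a b) c = swapc c a b (enum (vert G)).
  apply/ffunP => e; rewrite !ffunE.
  have -> : has (fun t => connect (kadj c a b) t (ends e).1) (enum (vert G)).
    by apply/hasP; exists (ends e).1; rewrite ?mem_enum ?connect0.
  rewrite andbT !inE; case: (c e =P a) => [->|Ha]; first by rewrite tpermL.
  case: (c e =P b) => [->|Hb] /=; first by rewrite tpermR.
  by rewrite tpermD // eq_sym; apply/eqP.
exact: swapc_equiv.
Qed.

Lemma perm_equiv c (p : {perm 'I_3}) : kequiv c (pcol p c).
Proof.
have [ts -> Hts] := prod_tpermP p.
elim: ts c Hts => [|t ts IH] c /=.
  move=> _; have -> : pcol (\prod_(t <- [::]) tperm t.1 t.2)%g c = c; last exact: kequiv_refl.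
  by apply/ffunP => e; rewrite ffunE big_nil perm1.
move=> /andP[Ht Hts]; rewrite big_cons.
apply: kequiv_trans (tperm_equiv c Ht) _.
have -> : pcol (tperm t.1 t.2 * \prod_(j <- ts) tperm j.1 j.2)%g c =
   pcol (\prod_(j <- ts) tperm j.1 j.2)%g (pcol (tperm t.1 t.2) c).
  by apply/ffunP => e; rewrite !ffunE permM.
exact: IH.
Qed.

End Gen.

Section Count.
Variable G : mgraph.
Implicit Types (c : coloring G) (a b k : 'I_3) (u v w : vert G) (e : edge G).

Lemma one_color c v k : #|[set e | incident v e]| = 3 -> proper_coloring c ->
  #|[set e | incident v e & c e == k]| = 1.
Proof.
move=> H3 Hp; set I := [set e | incident v e].
have Hinj : {in I &, injective c}.
  move=> e f; rewrite !inE => He Hf Hc; apply/eqP; apply/negP => /negP Hn.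
  by move: (Hp e f v Hn He Hf); rewrite Hc eqxx.
have HT : c @: I = setT.
  apply/eqP; rewrite eqEcard subsetT cardsT card_ord card_in_imset //. by rewrite H3.
have : k \in c @: I by rewrite HT inE.
move=> /imsetP [e0 He0 ->]; apply/eqP/cards1P; exists e0; apply/setP => e.
rewrite !inE; apply/andP/eqP => [[Hi /eqP Hc]|->]; last by move: He0; rewrite inE => ->.
by apply: Hinj => //; rewrite inE.
Qed.

Lemma card_sum (T : finType) (P : pred T) : #|[set x | P x]| = \sum_x (P x : nat).
Proof.
rewrite -sum1_card big_mkcond /=; apply: eq_bigr => x _; rewrite inE; by case: (P x).
Qed.

Lemma sum_eq_in (T : finType) (S : {set T}) x :
  \sum_(v in S) ((x == v) : nat) = (x \in S).
Proof.
case: (boolP (x \in S)) => Hx.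
  rewrite (bigD1 x) //= eqxx big1 // => v /andP[_ Hv]; by rewrite eq_sym (negbTE Hv).
rewrite big1 // => v Hv; case: eqP Hx => // ->; by rewrite Hv.
Qed.

Lemma parity c k (S : {set vert G}) :
  (forall v, v \in S -> #|[set e | incident v e & c e == k]| = 1) ->
  odd #|[set e | (c e == k) && (((ends e).1 \in S) != ((ends e).2 \in S))]| = odd #|S|.
Proof.
move=> H1.
have E1 : #|S| = \sum_(v in S) \sum_e ((c e == k) && incident v e : nat).
  rewrite -sum1_card; apply: eq_bigr => v Hv; apply: etrans (esym (H1 v Hv)) _; rewrite card_sum.
  by apply: eq_bigr => e _; rewrite andbC.
rewrite E1 exchange_big /=.
have E2 : forall e, \sum_(v in S) ((c e == k) && incident v e : nat) =
   ((c e == k) && (((ends e).1 \in S) != ((ends e).2 \in S))) +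
   2 * ((c e == k) && ((ends e).1 \in S) && ((ends e).2 \in S)).
  move=> e; case: (c e == k) => /=; last by rewrite big1.
  rewrite /incident.
  have -> : \sum_(v in S) (((ends e).1 == v) || ((ends e).2 == v) : nat) =
     \sum_(v in S) (((ends e).1 == v) : nat) + \sum_(v in S) (((ends e).2 == v) : nat).
    rewrite -big_split /=; apply: eq_bigr => v _.
    case: eqP => [<-|] /=; last by case: eqP.
    by rewrite eq_sym (negbTE (loopless e)).
  rewrite !sum_eq_in.
  by case: ((ends e).1 \in S); case: ((ends e).2 \in S).
rewrite (eq_bigr _ (fun e _ => E2 e)) big_split /= -big_distrr /= oddD oddM /= addbF.
by rewrite card_sum.
Qed.
End Count.

Section Local.
Variables (Gm G : mgraph) (p : vert Gm) (s : vert G) (h : edge Gm -> edge G).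
Hypothesis Hi : forall E, incident p E -> incident s (h E).
Hypothesis Hinj : forall E F, incident p E -> incident p F -> h E = h F -> E = F.

Lemma local_card :
  (forall e, incident s e -> exists2 E, incident p E & h E = e) ->
  #|[set E | incident p E]| = #|[set e | incident s e]|.
Proof.
move=> Hs; rewrite -(card_in_imset (f := h)); last first.
  by move=> E F; rewrite !inE; apply: Hinj.
apply: eq_card => e; rewrite inE; apply/imsetP/idP.
  by move=> [E]; rewrite inE => /Hi ? ->.
by move=> /Hs [E HE <-]; exists E; rewrite ?inE.
Qed.

Lemma local_proper (q : {perm 'I_3}) (c : coloring G) (f : coloring Gm) :
  (forall E, incident p E -> f E = q (c (h E))) -> proper_coloring c ->
  forall E F, E != F -> incident p E -> incident p F -> f E != f F.
Proof.
move=> Hf Hc E F Hn HE HF; rewrite !Hf // (inj_eq perm_inj).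
apply: (Hc _ _ s); try exact: Hi.
by apply/negP => /eqP /(Hinj HE HF) /eqP; apply/negP.
Qed.
End Local.

Section Proj.
Variables (Gm G : mgraph) (phi : vert Gm -> vert G) (eps : edge G -> edge Gm).
Hypothesis Heps : forall e, (phi (ends (eps e)).1 = (ends e).1 /\ phi (ends (eps e)).2 = (ends e).2)
   \/ (phi (ends (eps e)).1 = (ends e).2 /\ phi (ends (eps e)).2 = (ends e).1).
Hypothesis Hphi : forall E, phi (ends E).1 = phi (ends E).2 \/ exists e, eps e = E.

Definition proj (f : coloring Gm) : coloring G := [ffun e => f (eps e)].

Definition psi_ok (f : coloring Gm) a b (psi : vert G -> vert Gm) :=
  forall e, f (eps e) \in [:: a; b] ->
    connect (kadj f a b) (psi (ends e).1) (ends (eps e)).1 /\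
    connect (kadj f a b) (psi (ends e).2) (ends (eps e)).1.

Lemma proj_hom f a b p q : connect (kadj f a b) p q -> connect (kadj (proj f) a b) (phi p) (phi q).
Proof.
move=> /connectP [l]; elim: l p => [|r l IH] p /=; first by move=> _ ->; exact: connect0.
move=> /andP[Hpr Hl] Hq; apply: connect_trans (IH r Hl Hq).
move/existsP: Hpr => [E /andP[HE Hends]].
have Hpq : (phi p = phi (ends E).1 /\ phi r = phi (ends E).2) \/
           (phi p = phi (ends E).2 /\ phi r = phi (ends E).1).
  by case/orP: Hends => /eqP ->; [left|right].
case: (Hphi E) => [Heq|[e He]].
  by apply: eq_connect0; case: Hpq => -[-> ->].
have Hc : proj f e \in [:: a; b] by rewrite ffunE He.
have Ha := kadj_ends Hc; subst E.
case: Hpq => -[-> ->]; case: (Heps e) => -[-> ->]; apply: connect1 => //;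
  by rewrite kadj_sym.
Qed.

Lemma proj_back f a b psi s t : psi_ok f a b psi ->
  connect (kadj (proj f) a b) s t -> connect (kadj f a b) (psi s) (psi t).
Proof.
move=> Hok /connectP [l]; elim: l s => [|r l IH] s /=; first by move=> _ ->; exact: connect0.
move=> /andP[Hsr Hl] Ht; apply: connect_trans (IH r Hl Ht).
move/existsP: Hsr => [e /andP[He Hends]]; rewrite ffunE in He.
have [H1 H2] := Hok e He.
have Hsym := @kconnect_sym _ f a b.
case/orP: Hends => /eqP Hee; rewrite Hee /= in H1 H2.
- by apply: connect_trans H1 _; rewrite Hsym.
- by apply: connect_trans H2 _; rewrite Hsym.
Qed.

Lemma proj_switch f a b u psi : psi_ok f a b psi ->
  proj (kswitch f a b u) = proj f \/
  exists w, proj (kswitch f a b u) = kswitch (proj f) a b w.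
Proof.
move=> Hok.
have Hsym := @kconnect_sym _ f a b.
case: (boolP [exists e, (f (eps e) \in [:: a; b]) && connect (kadj f a b) u (ends (eps e)).1]).
- move=> /existsP [e0 /andP[He0 Hu0]]; right; exists (phi u).
  have Hfw : forall e, f (eps e) \in [:: a; b] ->
     connect (kadj f a b) u (ends (eps e)).1 -> connect (kadj (proj f) a b) (phi u) (ends e).1.
    move=> e He Hu; apply: connect_trans (proj_hom Hu) _.
    have Hc : proj f e \in [:: a; b] by rewrite ffunE.
    case: (Heps e) => -[-> _]; first exact: connect0.
    by apply: connect1; rewrite kadj_sym; apply: kadj_ends.
  apply/ffunP => e; rewrite /kswitch !ffunE.
  case He: (f (eps e) \in [:: a; b]) => //=.
  suff -> : connect (kadj f a b) u (ends (eps e)).1 = connect (kadj (proj f) a b) (phi u) (ends e).1 by [].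
  apply/idP/idP; first exact: Hfw.
  move=> /(proj_back Hok) Hb.
  have Hu : connect (kadj f a b) u (psi (phi u)).
    have := proj_back Hok (Hfw e0 He0 Hu0) => Hb0.
    apply: connect_trans Hu0 _; rewrite Hsym; apply: connect_trans Hb0 _.
    exact: (Hok e0 He0).1.
  apply: connect_trans Hu (connect_trans Hb _); exact: (Hok e He).1.
- rewrite negb_exists => /forallP Hn; left; apply/ffunP => e; rewrite /kswitch !ffunE.
  by move: (Hn e); rewrite negb_and => /orP[/negbTE->|/negbTE->]; rewrite ?andbF.
Qed.

Lemma proj_kequiv f1 f2 :
  (forall f a b, proper_coloring f -> a != b -> exists psi, psi_ok f a b psi) ->
  proper_coloring f1 -> kequiv f1 f2 -> kequiv (proj f1) (proj f2).
Proof.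
move=> Hall Hp1 H; elim: H Hp1 => [c|c a b u c' Hab _ IH] Hp; first exact: kequiv_refl.
have [psi Hok] := Hall c a b Hp Hab.
have IH' := IH (kswitch_proper a b u Hp).
case: (proj_switch u Hok) => [<-|[w Hw]] //.
apply: (kequiv_step (a := a) (b := b) (u := w)) => //; by rewrite -Hw.
Qed.
End Proj.

Section Helpers.
Variable G : mgraph.
Implicit Types (c : coloring G) (a b k : 'I_3) (u v w s : vert G) (e : edge G).

Lemma oend_ends v e : incident v e ->
  ends e = (v, oend v e) \/ ends e = (oend v e, v).
Proof.
rewrite /incident /oend; case: (ends e) => p q /=.
case: (p =P v) => [->|Hp] /=; first by left.
by move=> /eqP ->; right.
Qed.

Lemma oend_eq v s e : incident v e -> incident s e -> s != v -> oend v e = s.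
Proof.
move=> Hv; rewrite /incident; case: (oend_ends Hv) => ->;
  rewrite /= => /orP[]/eqP-> //; by rewrite eqxx.
Qed.

Lemma oend_inc v e : incident v e -> incident (oend v e) e.
Proof. by move=> Hv; rewrite /incident; case: (oend_ends Hv) => -> /=; rewrite eqxx ?orbT. Qed.

Lemma xcover (x : 'I_3 -> edge G) v : #|[set e | incident v e]| = 3 -> injective x ->
  (forall j, incident v (x j)) -> forall e, incident v e -> exists j, x j = e.
Proof.
move=> H3 Hx Hi e He.
have Hs : x @: setT = [set e | incident v e].
  apply/eqP; rewrite eqEcard H3 card_imset // cardsT card_ord leqnn andbT.
  by apply/subsetP => f /imsetP [j _ ->]; rewrite inE.
have : e \in x @: setT by rewrite Hs inE.
by move=> /imsetP [j _ ->]; exists j.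
Qed.

Lemma connect_edge c a b z e : c e \in [:: a; b] ->
  connect (kadj c a b) z (ends e).1 = connect (kadj c a b) z (ends e).2.
Proof.
move=> H; have Ha := kadj_ends H; apply/idP/idP => Hz.
  exact: connect_trans Hz (connect1 Ha).
by apply: connect_trans Hz (connect1 _); rewrite kadj_sym.
Qed.

Lemma even_verts c : cubic G -> proper_coloring c -> ~~ odd #|vert G|.
Proof.
move=> Hcub Hp; have := parity (S := setT) (k := ord0) (fun v _ => one_color ord0 (Hcub v) Hp).
rewrite cardsT => <-.
rewrite (_ : [set e | _] = set0) ?cards0 //.
by apply/setP => e; rewrite !inE andbF.
Qed.
End Helpers.

Lemma inl_eqE (A B : eqType) (a b : A) : (inl a == inl b :> A + B) = (a == b).
Proof. by apply/eqP/eqP => [[]|->]. Qed.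
Lemma inr_eqE (A B : eqType) (a b : B) : (inr a == inr b :> A + B) = (a == b).
Proof. by apply/eqP/eqP => [[]|->]. Qed.
Lemma inlr_eqE (A B : eqType) (a : A) (b : B) : (inl a == inr b :> A + B) = false.
Proof. by []. Qed.
Lemma inrl_eqE (A B : eqType) (a : A) (b : B) : (inr b == inl a :> A + B) = false.
Proof. by []. Qed.
Lemma sig_eqE (T : eqType) (P : pred T) a (Ha : P a) (s : {u | P u}) :
  (exist _ a Ha == s) = (a == val s).
Proof. by []. Qed.

Section Y.
Variables (G1 G2 : mgraph) (v1 : vert G1) (v2 : vert G2).
Variables (x : 'I_3 -> edge G1) (y : 'I_3 -> edge G2).
Hypotheses (Hc1 : cubic G1) (Hc2 : cubic G2).
Hypotheses (Hx : injective x) (Hxi : forall j, incident v1 (x j)).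
Hypotheses (Hy : injective y) (Hyi : forall j, incident v2 (y j)).
Local Notation YG := (Ygraph v1 v2 x y).

Lemma incY_ll (s : {u : vert G1 | u != v1}) (e : {e : edge G1 | ~~ incident v1 e}) :
  incident (inl s : vert YG) (inl (inl e) : edge YG) = incident (val s) (val e).
Proof. by rewrite /incident /= !inl_eqE !sig_eqE. Qed.

Lemma incY_lr (s : {u : vert G1 | u != v1}) e :
  incident (inl s : vert YG) (inl (inr e) : edge YG) = false.
Proof. by []. Qed.

Lemma incY_li (s : {u : vert G1 | u != v1}) j :
  incident (inl s : vert YG) (inr j : edge YG) = (oend v1 (x j) == val s).
Proof. by rewrite /incident /= inl_eqE sig_eqE orbF. Qed.

Lemma incY_rl (s : {u : vert G2 | u != v2}) e :
  incident (inr s : vert YG) (inl (inl e) : edge YG) = false.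
Proof. by []. Qed.

Lemma incY_rr (s : {u : vert G2 | u != v2}) (e : {e : edge G2 | ~~ incident v2 e}) :
  incident (inr s : vert YG) (inl (inr e) : edge YG) = incident (val s) (val e).
Proof. by rewrite /incident /= !inr_eqE !sig_eqE. Qed.

Lemma incY_ri (s : {u : vert G2 | u != v2}) j :
  incident (inr s : vert YG) (inr j : edge YG) = (oend v2 (y j) == val s).
Proof. by rewrite /incident /= !inr_eqE !sig_eqE. Qed.


Definition h1 (E : edge YG) : edge G1 :=
  match E with inl (inl e) => val e | inl (inr _) => x ord0 | inr j => x j end.
Definition h2 (E : edge YG) : edge G2 :=
  match E with inl (inr e) => val e | inl (inl _) => y ord0 | inr j => y j end.

Lemma h1_inc (s : {u : vert G1 | u != v1}) E : incident (inl s : vert YG) E -> incident (val s) (h1 E).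
Proof.
case: E => [[e|e]|j]; rewrite ?incY_ll ?incY_lr ?incY_li //=.
by move=> /eqP <-; apply: oend_inc.
Qed.

Lemma h1_inj (s : {u : vert G1 | u != v1}) E F : incident (inl s : vert YG) E ->
  incident (inl s : vert YG) F -> h1 E = h1 F -> E = F.
Proof.
case: E => [[e|e]|j]; case: F => [[f|f]|k]; rewrite ?incY_lr //= => _ _.
- by move/val_inj => ->.
- move=> He; have Hn : ~~ incident _ (sval e) := valP e; by rewrite He Hxi in Hn.
- move=> He; have Hn : ~~ incident _ (sval f) := valP f; by rewrite -He Hxi in Hn.
- by move/Hx => ->.
Qed.

Lemma h1_sur (s : {u : vert G1 | u != v1}) e : incident (val s) e ->
  exists2 E, incident (inl s : vert YG) E & h1 E = e.
Proof.
move=> Hs; case: (boolP (incident v1 e)) => Hv.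
  have [j Hj] := xcover (Hc1 v1) Hx Hxi Hv.
  exists (inr j) => //; rewrite incY_li; apply/eqP; apply: oend_eq; rewrite ?Hj //.
  exact: (valP s).
by exists (inl (inl (exist _ e Hv))); rewrite ?incY_ll.
Qed.

Lemma h2_inc (s : {u : vert G2 | u != v2}) E : incident (inr s : vert YG) E -> incident (val s) (h2 E).
Proof.
case: E => [[e|e]|j]; rewrite ?incY_rr ?incY_rl ?incY_ri //=.
by move=> /eqP <-; apply: oend_inc.
Qed.

Lemma h2_inj (s : {u : vert G2 | u != v2}) E F : incident (inr s : vert YG) E ->
  incident (inr s : vert YG) F -> h2 E = h2 F -> E = F.
Proof.
case: E => [[e|e]|j]; case: F => [[f|f]|k]; rewrite ?incY_rl //= => _ _.
- by move/val_inj => ->.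
- move=> He; have Hn : ~~ incident _ (sval e) := valP e; by rewrite He Hyi in Hn.
- move=> He; have Hn : ~~ incident _ (sval f) := valP f; by rewrite -He Hyi in Hn.
- by move/Hy => ->.
Qed.

Lemma h2_sur (s : {u : vert G2 | u != v2}) e : incident (val s) e ->
  exists2 E, incident (inr s : vert YG) E & h2 E = e.
Proof.
move=> Hs; case: (boolP (incident v2 e)) => Hv.
  have [j Hj] := xcover (Hc2 v2) Hy Hyi Hv.
  exists (inr j) => //; rewrite incY_ri; apply/eqP; apply: oend_eq; rewrite ?Hj //.
  exact: (valP s).
by exists (inl (inr (exist _ e Hv))); rewrite ?incY_rr.
Qed.

Lemma cubicY : cubic YG.
Proof.
case=> [s|s].
- rewrite (local_card (s := val s) (h := h1)); [exact: Hc1| |exact: h1_inj|exact: h1_sur].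
  exact: h1_inc.
- rewrite (local_card (s := val s) (h := h2)); [exact: Hc2| |exact: h2_inj|exact: h2_sur].
  exact: h2_inc.
Qed.

Lemma Yproper (c : coloring G1) (d : coloring G2) (f : coloring YG) : proper_coloring c -> proper_coloring d -> Ycol c d f ->
  proper_coloring f.
Proof.
move=> Hc Hd [p [Hp Hf]] E F [s|s].
- apply: (@local_proper YG G1 (inl s) (val s) h1 (@h1_inc s) (@h1_inj s) 1%g c f _ Hc E F).
  by case => [[e|e]|j]; rewrite Hf perm1.
- apply: (@local_proper YG G2 (inr s) (val s) h2 (@h2_inc s) (@h2_inj s) p d f _ Hd E F).
  by case => [[e|e]|j]; rewrite Hf //= Hp.
Qed.


Definition sideL (p : vert YG) : bool := if p is inl _ then true else false.

Lemma card_sideL : #|[set p | sideL p]| = #|vert G1|.-1.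
Proof.
have -> : [set p | sideL p] = (@inl {u : vert G1 | u != v1} {u : vert G2 | u != v2}) @: setT.
  apply/setP => -[p|p]; rewrite !inE /=.
    by apply/esym/imsetP; exists p; rewrite ?inE.
  by apply/esym/negP => /imsetP [q _].
rewrite card_imset; last by move=> p q [].
by rewrite cardsT card_sig -(cardC1 v1).
Qed.

Lemma one_colorY (f : coloring YG) k p : proper_coloring f ->
  #|[set E | incident p E & f E == k]| = 1.
Proof. move=> Hp; apply: one_color => //; exact: cubicY. Qed.

Lemma cut_odd (c : coloring G1) (f : coloring YG) k : proper_coloring c -> proper_coloring f ->
  odd #|[set j | f (inr j) == k]|.
Proof.
move=> Hc Hf.
have E := parity (S := [set p | sideL p]) (k := k) (fun v _ => one_colorY k v Hf).
rewrite card_sideL in E.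
have Hev := even_verts Hc1 Hc.
have Hpos : 0 < #|vert G1| by apply/card_gt0P; exists v1.
have Ho : odd #|vert G1|.-1 = true.
  by move: Hev Hpos; case: #|vert G1| => //= n; rewrite negbK.
rewrite Ho in E; apply: etrans _ E; congr (odd _).
have -> : [set E : edge YG | (f E == k) && (((ends E).1 \in [set p | sideL p]) != ((ends E).2 \in [set p | sideL p]))]
   = (@inr _ 'I_3) @: [set j | f (inr j) == k].
  apply/setP => -[[e|e]|j]; rewrite !inE /=.
  - by rewrite andbF; apply/esym/negP => /imsetP [q _].
  - by rewrite andbF; apply/esym/negP => /imsetP [q _].
  - rewrite andbT; apply/idP/imsetP => [H|[q]]; first by exists j; rewrite ?inE.
    by rewrite inE => Hq [->].
by rewrite card_imset //; move=> p q [].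
Qed.

Lemma cut_inj (c : coloring G1) (f : coloring YG) : proper_coloring c -> proper_coloring f ->
  injective (fun j => f (inr j)).
Proof.
move=> Hc Hf i j /= Heq; apply/eqP; apply/negP => /negP Hij.
set k := f (inr i).
have Hk := cut_odd k Hc Hf.
have Hsub : [set i; j] \subset [set j0 | f (inr j0) == k].
  by apply/subsetP => l; rewrite !inE => /orP[]/eqP->; rewrite /k ?Heq eqxx.
have H2 := subset_leq_card Hsub; rewrite cards2 Hij in H2.
have H3 := max_card (mem [set j0 | f (inr j0) == k]); rewrite card_ord in H3.
have Hall : [set j0 | f (inr j0) == k] = setT.
  apply/eqP; rewrite eqEcard subsetT cardsT card_ord.
  by move: H2 H3 Hk; case: #|_| => [|[|[|[|n]]]].
pose k' : 'I_3 := if k == ord0 then ord_max else ord0.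
have Hk' : k' != k by rewrite /k'; case: (k =P ord0) => [->|/eqP]; rewrite // eq_sym.
have := cut_odd k' Hc Hf.
suff -> : [set j0 | f (inr j0) == k'] = set0 by rewrite cards0.
apply/setP => l; rewrite !inE; apply/negP => /eqP Hl.
have : l \in [set j0 | f (inr j0) == k] by rewrite Hall inE.
by rewrite inE Hl (negbTE Hk').
Qed.

Lemma cut_sur (c : coloring G1) (f : coloring YG) k : proper_coloring c -> proper_coloring f ->
  exists j, f (inr j) = k.
Proof.
move=> Hc Hf; have := inj_card_onto (cut_inj Hc Hf) (leqnn _) k.
by move=> /codomP [j ->]; exists j.
Qed.


Lemma cut_conn (c : coloring G1) (f : coloring YG) a b ja jb :
  proper_coloring c -> proper_coloring f -> a != b -> f (inr ja) = a -> f (inr jb) = b ->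
  connect (kadj f a b) (ends (inr ja : edge YG)).1 (ends (inr jb : edge YG)).1.
Proof.
move=> Hc Hf Hab Ha Hb.
set z := (ends (inr ja : edge YG)).1.
set C := [set p | sideL p && connect (kadj f a b) z p].
have Hcut : forall k, k \in [:: a; b] -> forall E : edge YG,
   ((f E == k) && (((ends E).1 \in C) != ((ends E).2 \in C))) =
   match E with inr j => (f (inr j) == k) && connect (kadj f a b) z (ends E).1 | _ => false end.
  move=> k Hk [[e|e]|j]; rewrite !inE /=.
  - case: eqP => //= Hek; rewrite (connect_edge z (e := inl (inl e) : edge YG)) ?eqxx //.
    by rewrite Hek.
  - by rewrite andbF.
  - by case: (connect _ z _); rewrite ?andbT ?andbF.
have Pa := parity (S := C) (k := a) (fun v _ => one_colorY a v Hf).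
have Pb := parity (S := C) (k := b) (fun v _ => one_colorY b v Hf).
have Hinj := cut_inj Hc Hf.
have Ea : [set E | (f E == a) && (((ends E).1 \in C) != ((ends E).2 \in C))] = [set inr ja].
  apply/setP => E; rewrite inE Hcut ?inE ?eqxx //.
  case: E => [[e|e]|j] //.
  apply/andP/eqP => [[/eqP Hj _]|[->]]; first by congr inr; apply: Hinj; rewrite /= Hj Ha.
  by rewrite Ha eqxx connect0.
rewrite Ea cards1 in Pa.
apply/negPn/negP => Hn.
have : [set E | (f E == b) && (((ends E).1 \in C) != ((ends E).2 \in C))] = set0.
  apply/setP => E; rewrite inE Hcut ?inE ?eqxx ?orbT //.
  case: E => [[e|e]|j] //.
  apply/negP => /andP [/eqP Hj Hz].
  have Hjb : j = jb by apply: Hinj; rewrite /= Hj Hb.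
  by move: Hz; rewrite Hjb (negbTE Hn).
move=> Hb0; rewrite Hb0 cards0 -Pa in Pb.
by [].
Qed.


Definition idx1 (e : edge G1) : 'I_3 := odflt ord0 [pick j | x j == e].
Lemma idx1K j : idx1 (x j) = j.
Proof.
rewrite /idx1; case: pickP => [k /eqP /Hx -> //|H].
by have := H j; rewrite eqxx.
Qed.
Definition eps1 (e : edge G1) : edge YG :=
  if insub e is Some e' then inl (inl e') else inr (idx1 e).
Definition phi1 (p : vert YG) : vert G1 := if p is inl s then val s else v1.

Lemma eps1_ni e (H : ~~ incident v1 e) : eps1 e = inl (inl (exist _ e H)).
Proof. by rewrite /eps1 insubT. Qed.
Lemma eps1_x j : eps1 (x j) = inr j.
Proof. by rewrite /eps1 insubF ?idx1K // Hxi. Qed.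

Lemma Heps1 e : (phi1 (ends (eps1 e)).1 = (ends e).1 /\ phi1 (ends (eps1 e)).2 = (ends e).2)
   \/ (phi1 (ends (eps1 e)).1 = (ends e).2 /\ phi1 (ends (eps1 e)).2 = (ends e).1).
Proof.
case: (boolP (incident v1 e)) => H.
  have [j <-] := xcover (Hc1 v1) Hx Hxi H; rewrite eps1_x /=.
  by case: (oend_ends (Hxi j)) => ->; [right|left].
by rewrite (eps1_ni H); left.
Qed.

Lemma Hphi1 (E : edge YG) : phi1 (ends E).1 = phi1 (ends E).2 \/ exists e, eps1 e = E.
Proof.
case: E => [[[e He]|e]|j].
- by right; exists e; rewrite eps1_ni.
- by left.
- by right; exists (x j); rewrite eps1_x.
Qed.

Lemma proj1_Ycol (c : coloring G1) (d : coloring G2) (f : coloring YG) :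
  Ycol c d f -> proj eps1 f = c.
Proof.
move=> [p [Hp Hf]]; apply/ffunP => e; rewrite ffunE.
case: (boolP (incident v1 e)) => H.
  by have [j <-] := xcover (Hc1 v1) Hx Hxi H; rewrite eps1_x Hf.
by rewrite (eps1_ni H) Hf.
Qed.

Definition psi1 (ja : 'I_3) (s : vert G1) : vert YG :=
  if insub s is Some s' then inl s' else (ends (inr ja : edge YG)).2.
Lemma psi1_ni ja s (H : s != v1) : psi1 ja s = inl (exist _ s H).
Proof. by rewrite /psi1 insubT. Qed.
Lemma psi1_v1 ja : psi1 ja v1 = (ends (inr ja : edge YG)).2.
Proof. by rewrite /psi1 insubF // eqxx. Qed.

Lemma cut_reach (c : coloring G1) (f : coloring YG) a b ja j :
  proper_coloring c -> proper_coloring f -> a != b -> f (inr ja) = a ->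
  f (inr j) \in [:: a; b] ->
  connect (kadj f a b) (ends (inr ja : edge YG)).1 (ends (inr j : edge YG)).1.
Proof.
move=> Hc Hf Hab Ha; rewrite !inE => /orP[]/eqP Hj.
  have -> : j = ja by apply: (cut_inj Hc Hf); rewrite /= Hj Ha.
  exact: connect0.
exact: (cut_conn Hc Hf Hab Ha Hj).
Qed.

Lemma psi1_ok (c : coloring G1) (f : coloring YG) a b ja :
  proper_coloring c -> proper_coloring f -> a != b -> f (inr ja) = a ->
  psi_ok eps1 f a b (psi1 ja).
Proof.
move=> Hc Hf Hab Ha e He.
have Hsym := @kconnect_sym _ f a b.
case: (boolP (incident v1 e)) => H.
  have [j Hj] := xcover (Hc1 v1) Hx Hxi H; subst e; rewrite eps1_x in He *.
  have Hv : connect (kadj f a b) (psi1 ja v1) (ends (inr j : edge YG)).1.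
    rewrite psi1_v1; apply: connect_trans (cut_reach Hc Hf Hab Ha He).
    apply: connect1; rewrite kadj_sym; apply: kadj_ends; by rewrite Ha !inE eqxx.
  have Ho : psi1 ja (oend v1 (x j)) = (ends (inr j : edge YG)).1 by rewrite (psi1_ni ja (oend_neq v1 (x j))).
  by case: (oend_ends (Hxi j)) => -> /=; rewrite ?Ho; split => //; exact: connect0.
rewrite (eps1_ni H) in He *.
rewrite (psi1_ni ja (notinc_neq1 H)) (psi1_ni ja (notinc_neq2 H)); split; first by apply: eq_connect0; congr inl; apply: val_inj.
by apply: connect1; rewrite kadj_sym; apply: (kadj_ends He).
Qed.

Definition idx2 (e : edge G2) : 'I_3 := odflt ord0 [pick j | y j == e].
Lemma idx2K j : idx2 (y j) = j.
Proof.
rewrite /idx2; case: pickP => [k /eqP /Hy -> //|H].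
by have := H j; rewrite eqxx.
Qed.
Definition eps2 (e : edge G2) : edge YG :=
  if insub e is Some e' then inl (inr e') else inr (idx2 e).
Definition phi2 (p : vert YG) : vert G2 := if p is inr s then val s else v2.

Lemma eps2_ni e (H : ~~ incident v2 e) : eps2 e = inl (inr (exist _ e H)).
Proof. by rewrite /eps2 insubT. Qed.
Lemma eps2_y j : eps2 (y j) = inr j.
Proof. by rewrite /eps2 insubF ?idx2K // Hyi. Qed.

Lemma Heps2 e : (phi2 (ends (eps2 e)).1 = (ends e).1 /\ phi2 (ends (eps2 e)).2 = (ends e).2)
   \/ (phi2 (ends (eps2 e)).1 = (ends e).2 /\ phi2 (ends (eps2 e)).2 = (ends e).1).
Proof.
case: (boolP (incident v2 e)) => H.
  have [j <-] := xcover (Hc2 v2) Hy Hyi H; rewrite eps2_y /=.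
  by case: (oend_ends (Hyi j)) => ->; [left|right].
by rewrite (eps2_ni H); left.
Qed.

Lemma Hphi2 (E : edge YG) : phi2 (ends E).1 = phi2 (ends E).2 \/ exists e, eps2 e = E.
Proof.
case: E => [[e|[e He]]|j].
- by left.
- by right; exists e; rewrite eps2_ni.
- by right; exists (y j); rewrite eps2_y.
Qed.

Lemma proj2_Ycol (c : coloring G1) (d : coloring G2) (f : coloring YG) :
  Ycol c d f -> exists p, proj eps2 f = pcol p d.
Proof.
move=> [p [Hp Hf]]; exists p; apply/ffunP => e; rewrite !ffunE.
case: (boolP (incident v2 e)) => H.
  by have [j <-] := xcover (Hc2 v2) Hy Hyi H; rewrite eps2_y Hf Hp.
by rewrite (eps2_ni H) Hf.
Qed.

Definition psi2 (ja : 'I_3) (s : vert G2) : vert YG :=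
  if insub s is Some s' then inr s' else (ends (inr ja : edge YG)).1.
Lemma psi2_ni ja s (H : s != v2) : psi2 ja s = inr (exist _ s H).
Proof. by rewrite /psi2 insubT. Qed.
Lemma psi2_v2 ja : psi2 ja v2 = (ends (inr ja : edge YG)).1.
Proof. by rewrite /psi2 insubF // eqxx. Qed.

Lemma psi2_ok (c : coloring G1) (f : coloring YG) a b ja :
  proper_coloring c -> proper_coloring f -> a != b -> f (inr ja) = a ->
  psi_ok eps2 f a b (psi2 ja).
Proof.
move=> Hc Hf Hab Ha e He.
have Hsym := @kconnect_sym _ f a b.
case: (boolP (incident v2 e)) => H.
  have [j Hj] := xcover (Hc2 v2) Hy Hyi H; subst e; rewrite eps2_y in He *.
  have Hv : connect (kadj f a b) (psi2 ja v2) (ends (inr j : edge YG)).1.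
    rewrite psi2_v2; exact: (cut_reach Hc Hf Hab Ha He).
  have Ho : connect (kadj f a b) (psi2 ja (oend v2 (y j))) (ends (inr j : edge YG)).1.
    rewrite (psi2_ni ja (oend_neq v2 (y j))).
    apply: connect1; rewrite kadj_sym; exact: (kadj_ends He).
  by case: (oend_ends (Hyi j)) => -> /=.
rewrite (eps2_ni H) in He *.
rewrite (psi2_ni ja (notinc_neq1 H)) (psi2_ni ja (notinc_neq2 H)); split; first by apply: eq_connect0; congr inr; apply: val_inj.
by apply: connect1; rewrite kadj_sym; apply: (kadj_ends He).
Qed.

Lemma Y_main (c1 c2 : coloring G1) (d1 d2 : coloring G2) (f1 f2 : coloring YG) :
  proper_coloring c1 -> proper_coloring d1 ->
  Ycol c1 d1 f1 -> Ycol c2 d2 f2 -> kequiv f1 f2 -> kequiv c1 c2 /\ kequiv d1 d2.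
Proof.
move=> Hc Hd Hy1 Hy2 Hk.
have Hf1 := Yproper Hc Hd Hy1.
have Hall : forall (G : mgraph) (eps : edge G -> edge YG) (psi : 'I_3 -> vert G -> vert YG),
   (forall (f : coloring YG) (a b ja : 'I_3), proper_coloring f -> a != b -> f (inr ja) = a -> psi_ok eps f a b (psi ja)) ->
   forall (f : coloring YG) (a b : 'I_3), proper_coloring f -> a != b -> exists psi0, psi_ok eps f a b psi0.
  move=> G eps psi H f a b Hf Hab.
  have [ja Hja] := cut_sur a Hc Hf.
  by exists (psi ja); apply: H.
split.
  rewrite -(proj1_Ycol Hy1) -(proj1_Ycol Hy2).
  apply: (proj_kequiv Heps1 Hphi1) => //.
  apply: (Hall _ _ psi1) => f a b ja Hf Hab Ha; exact: (psi1_ok Hc Hf Hab Ha).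
have [p1 Hp1] := proj2_Ycol Hy1.
have [p2 Hp2] := proj2_Ycol Hy2.
have H : kequiv (pcol p1 d1) (pcol p2 d2).
  rewrite -Hp1 -Hp2; apply: (proj_kequiv Heps2 Hphi2) => //.
  apply: (Hall _ _ psi2) => f a b ja Hf Hab Ha; exact: (psi2_ok Hc Hf Hab Ha).
apply: kequiv_trans (perm_equiv d1 p1) _; apply: kequiv_trans H _.
apply: kequiv_sym; exact: perm_equiv.
Qed.

End Y.

Section H.
Variables (G1 G2 : mgraph) (x : edge G1) (y : edge G2).
Variables (s11 s12 : vert G1) (s21 s22 : vert G2).
Hypotheses (Hc1 : cubic G1) (Hc2 : cubic G2).
Hypothesis Hx : ends x = (s11, s12) \/ ends x = (s12, s11).
Hypothesis Hy : ends y = (s21, s22) \/ ends y = (s22, s21).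
Local Notation HG := (Hgraph x y s11 s12 s21 s22).

Lemma s1_neq : s11 != s12.
Proof. have := loopless x; case: Hx => -> //=; by rewrite eq_sym. Qed.
Lemma s2_neq : s21 != s22.
Proof. have := loopless y; case: Hy => -> //=; by rewrite eq_sym. Qed.

Lemma incx s : incident s x = (s == s11) || (s == s12).
Proof. by rewrite /incident; case: Hx => -> /=; rewrite !(eq_sym s) // orbC. Qed.
Lemma incy s : incident s y = (s == s21) || (s == s22).
Proof. by rewrite /incident; case: Hy => -> /=; rewrite !(eq_sym s) // orbC. Qed.

Lemma incH_ll s (e : {e : edge G1 | e != x}) :
  incident (inl s : vert HG) (inl (inl e) : edge HG) = incident s (val e).
Proof. by rewrite /incident /= !inl_eqE. Qed.
Lemma incH_lr s e : incident (inl s : vert HG) (inl (inr e) : edge HG) = false.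
Proof. by []. Qed.
Lemma incH_lb s (bb : bool) :
  incident (inl s : vert HG) (inr bb : edge HG) = if bb then s12 == s else s11 == s.
Proof. by case: bb; rewrite /incident /= inl_eqE orbF. Qed.
Lemma incH_rl s e : incident (inr s : vert HG) (inl (inl e) : edge HG) = false.
Proof. by []. Qed.
Lemma incH_rr s (e : {e : edge G2 | e != y}) :
  incident (inr s : vert HG) (inl (inr e) : edge HG) = incident s (val e).
Proof. by rewrite /incident /= !inr_eqE. Qed.
Lemma incH_rb s (bb : bool) :
  incident (inr s : vert HG) (inr bb : edge HG) = if bb then s22 == s else s21 == s.
Proof. by case: bb; rewrite /incident /= inr_eqE. Qed.

Definition hh1 (E : edge HG) : edge G1 :=
  match E with inl (inl e) => val e | _ => x end.
Definition hh2 (E : edge HG) : edge G2 :=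
  match E with inl (inr e) => val e | _ => y end.

Lemma hh1_inc s E : incident (inl s : vert HG) E -> incident s (hh1 E).
Proof.
case: E => [[e|e]|[]]; rewrite ?incH_ll ?incH_lr ?incH_lb //= => /eqP <-;
  by rewrite incx eqxx ?orbT.
Qed.

Lemma hh1_inj s E F : incident (inl s : vert HG) E ->
  incident (inl s : vert HG) F -> hh1 E = hh1 F -> E = F.
Proof.
case: E => [[e|e]|b1]; case: F => [[f|f]|b2]; rewrite ?incH_lr //= => HE HF.
- by move/val_inj => ->.
- move=> He; have Hn : sval e != x := valP e; by rewrite He eqxx in Hn.
- move=> He; have Hn : sval f != x := valP f; by rewrite -He eqxx in Hn.
- move=> _; move: HE HF; rewrite !incH_lb.
  case: b1; case: b2 => // /eqP <- /eqP Hs; by move: s1_neq; rewrite Hs eqxx.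
Qed.

Lemma hh1_sur s e : incident s e -> exists2 E, incident (inl s : vert HG) E & hh1 E = e.
Proof.
move=> Hs; case: (e =P x) => [He|/eqP Hn].
  subst e; move: Hs; rewrite incx => /orP[]/eqP ->.
  - by exists (inr false); rewrite ?incH_lb.
  - by exists (inr true); rewrite ?incH_lb.
by exists (inl (inl (exist _ e Hn))); rewrite ?incH_ll.
Qed.

Lemma hh2_inc s E : incident (inr s : vert HG) E -> incident s (hh2 E).
Proof.
case: E => [[e|e]|[]]; rewrite ?incH_rr ?incH_rl ?incH_rb //= => /eqP <-;
  by rewrite incy eqxx ?orbT.
Qed.

Lemma hh2_inj s E F : incident (inr s : vert HG) E ->
  incident (inr s : vert HG) F -> hh2 E = hh2 F -> E = F.
Proof.
case: E => [[e|e]|b1]; case: F => [[f|f]|b2]; rewrite ?incH_rl //= => HE HF.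
- by move/val_inj => ->.
- move=> He; have Hn : sval e != y := valP e; by rewrite He eqxx in Hn.
- move=> He; have Hn : sval f != y := valP f; by rewrite -He eqxx in Hn.
- move=> _; move: HE HF; rewrite !incH_rb.
  case: b1; case: b2 => // /eqP <- /eqP Hs; by move: s2_neq; rewrite Hs eqxx.
Qed.

Lemma hh2_sur s e : incident s e -> exists2 E, incident (inr s : vert HG) E & hh2 E = e.
Proof.
move=> Hs; case: (e =P y) => [He|/eqP Hn].
  subst e; move: Hs; rewrite incy => /orP[]/eqP ->.
  - by exists (inr false); rewrite ?incH_rb.
  - by exists (inr true); rewrite ?incH_rb.
by exists (inl (inr (exist _ e Hn))); rewrite ?incH_rr.
Qed.

Lemma cubicH : cubic HG.
Proof.
case=> [s|s].
- rewrite (local_card (s := s) (h := hh1)); [exact: Hc1| |exact: hh1_inj|exact: hh1_sur].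
  exact: hh1_inc.
- rewrite (local_card (s := s) (h := hh2)); [exact: Hc2| |exact: hh2_inj|exact: hh2_sur].
  exact: hh2_inc.
Qed.

Lemma Hproper (c : coloring G1) (d : coloring G2) (f : coloring HG) :
  proper_coloring c -> proper_coloring d -> Hcol c d f -> proper_coloring f.
Proof.
move=> Hc Hd [p [Hp Hf]] E F [s|s].
- apply: (@local_proper HG G1 (inl s) s hh1 (@hh1_inc s) (@hh1_inj s) 1%g c f _ Hc E F).
  by case => [[e|e]|j]; rewrite Hf perm1.
- apply: (@local_proper HG G2 (inr s) s hh2 (@hh2_inc s) (@hh2_inj s) p d f _ Hd E F).
  by case => [[e|e]|j]; rewrite Hf //= Hp.
Qed.


Definition sideLH (p : vert HG) : bool := if p is inl _ then true else false.

Lemma one_colorH (f : coloring HG) k p : proper_coloring f ->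
  #|[set E | incident p E & f E == k]| = 1.
Proof. move=> Hp; apply: one_color => //; exact: cubicH. Qed.

Lemma cutH_same (c : coloring G1) (f : coloring HG) : proper_coloring c -> proper_coloring f ->
  f (inr true) = f (inr false).
Proof.
move=> Hc Hf; set k := f (inr false).
have E := parity (S := [set p | sideLH p]) (k := k) (fun v _ => one_colorH k v Hf).
have Hcard : #|[set p | sideLH p]| = #|vert G1|.
  have -> : [set p | sideLH p] = (@inl (vert G1) (vert G2)) @: setT.
    apply/setP => -[p|p]; rewrite !inE /=.
      by apply/esym/imsetP; exists p; rewrite ?inE.
    by apply/esym/negP => /imsetP [q _].
  by rewrite card_imset ?cardsT //; move=> p q [].
rewrite Hcard (negbTE (even_verts Hc1 Hc)) in E.
apply/eqP/negP => /negP Hn; move: E.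
have -> : [set E : edge HG | (f E == k) && (((ends E).1 \in [set p | sideLH p]) != ((ends E).2 \in [set p | sideLH p]))]
   = [set (inr false : edge HG)].
  by apply/setP => -[[e|e]|[]]; rewrite !inE /= ?andbF ?(negbTE Hn) ?eqxx.
by rewrite cards1.
Qed.

Lemma cutH_conn (c : coloring G1) (f : coloring HG) a b :
  proper_coloring c -> proper_coloring f -> a != b -> f (inr false) \in [:: a; b] ->
  connect (kadj f a b) (inl s11) (inl s12).
Proof.
move=> Hc Hf Hab Hk.
move: Hk; move Hkd : (f (inr false)) => k Hk.
pose k' := if k == a then b else a.
have Hk' : k' \in [:: a; b] by rewrite /k'; case: (k == a); rewrite !inE eqxx ?orbT.
have Hkk : k' != k.
  rewrite /k'; case: (k =P a) => [->|Hka]; first by rewrite ?eqxx eq_sym.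
  by move: Hk; rewrite !inE => /orP[/eqP Hka'|/eqP ->]; [case: Hka|].
have Hsame := cutH_same Hc Hf.
set z : vert HG := inl s11.
set C := [set p | sideLH p && connect (kadj f a b) z p].
have Hcut : forall k0, k0 \in [:: a; b] -> forall E : edge HG,
   ((f E == k0) && (((ends E).1 \in C) != ((ends E).2 \in C))) =
   match E with inr j => (f (inr j) == k0) && connect (kadj f a b) z (ends E).1 | _ => false end.
  move=> k0 Hk0 [[e|e]|j]; rewrite !inE /=.
  - case: eqP => //= Hek; rewrite (connect_edge z (e := inl (inl e) : edge HG)) ?eqxx //.
    by rewrite Hek.
  - by rewrite andbF.
  - by case: j; case: (connect _ z _); rewrite /= ?andbT ?andbF.
have Pa := parity (S := C) (k := k) (fun v _ => one_colorH k v Hf).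
have Pb := parity (S := C) (k := k') (fun v _ => one_colorH k' v Hf).
rewrite -Pb in Pa.
apply/negPn/negP => Hn; move: Pa.
have -> : [set E | (f E == k') && (((ends E).1 \in C) != ((ends E).2 \in C))] = set0.
  apply/setP => E; rewrite inE Hcut // inE.
  case: E => [[e|e]|[]] //; rewrite ?Hsame Hkd; by rewrite eq_sym (negbTE Hkk).
have -> : [set E | (f E == k) && (((ends E).1 \in C) != ((ends E).2 \in C))] = [set inr false].
  apply/setP => E; rewrite inE Hcut // inE.
  case: E => [[e|e]|[]] //=.
  - by rewrite Hsame Hkd eqxx /= (negbTE Hn).
  - by rewrite Hkd eqxx connect0.
by rewrite cards0 cards1.
Qed.

Definition heps1 (e : edge G1) : edge HG :=
  if insub e is Some e' then inl (inl e') else inr false.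
Definition hphi1 (p : vert HG) : vert G1 := if p is inl s then s else s12.
Lemma heps1_ni e (H : e != x) : heps1 e = inl (inl (exist _ e H)).
Proof. by rewrite /heps1 insubT. Qed.
Lemma heps1_x : heps1 x = inr false.
Proof. by rewrite /heps1 insubF // eqxx. Qed.

Lemma Hheps1 e : (hphi1 (ends (heps1 e)).1 = (ends e).1 /\ hphi1 (ends (heps1 e)).2 = (ends e).2)
   \/ (hphi1 (ends (heps1 e)).1 = (ends e).2 /\ hphi1 (ends (heps1 e)).2 = (ends e).1).
Proof.
case: (e =P x) => [->|/eqP H].
  by rewrite heps1_x /=; case: Hx => ->; [left|right].
by rewrite (heps1_ni H); left.
Qed.

Lemma Hhphi1 (E : edge HG) : hphi1 (ends E).1 = hphi1 (ends E).2 \/ exists e, heps1 e = E.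
Proof.
case: E => [[[e He]|e]|[]].
- by right; exists e; rewrite heps1_ni.
- by left.
- by left.
- by right; exists x; rewrite heps1_x.
Qed.

Lemma proj1_Hcol (c : coloring G1) (d : coloring G2) (f : coloring HG) :
  Hcol c d f -> proj heps1 f = c.
Proof.
move=> [p [Hp Hf]]; apply/ffunP => e; rewrite ffunE.
case: (e =P x) => [->|/eqP H]; first by rewrite heps1_x Hf.
by rewrite (heps1_ni H) Hf.
Qed.

Lemma hpsi1_ok (c : coloring G1) (f : coloring HG) a b :
  proper_coloring c -> proper_coloring f -> a != b ->
  psi_ok heps1 f a b (fun s => inl s).
Proof.
move=> Hc Hf Hab e He.
have Hsym := @kconnect_sym _ f a b.
case: (e =P x) => [Hex|/eqP H].
  subst e; rewrite heps1_x in He *.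
  have Hcn := cutH_conn Hc Hf Hab He.
  by case: Hx => -> /=; split => //; rewrite ?connect0 // Hsym.
rewrite (heps1_ni H) in He *; split; first by apply: connect0.
by apply: connect1; rewrite kadj_sym; apply: (kadj_ends He).
Qed.

Definition heps2 (e : edge G2) : edge HG :=
  if insub e is Some e' then inl (inr e') else inr false.
Definition hphi2 (p : vert HG) : vert G2 := if p is inr s then s else s22.
Lemma heps2_ni e (H : e != y) : heps2 e = inl (inr (exist _ e H)).
Proof. by rewrite /heps2 insubT. Qed.
Lemma heps2_y : heps2 y = inr false.
Proof. by rewrite /heps2 insubF // eqxx. Qed.

Lemma Hheps2 e : (hphi2 (ends (heps2 e)).1 = (ends e).1 /\ hphi2 (ends (heps2 e)).2 = (ends e).2)
   \/ (hphi2 (ends (heps2 e)).1 = (ends e).2 /\ hphi2 (ends (heps2 e)).2 = (ends e).1).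
Proof.
case: (e =P y) => [->|/eqP H].
  by rewrite heps2_y /=; case: Hy => ->; [right|left].
by rewrite (heps2_ni H); left.
Qed.

Lemma Hhphi2 (E : edge HG) : hphi2 (ends E).1 = hphi2 (ends E).2 \/ exists e, heps2 e = E.
Proof.
case: E => [[e|[e He]]|[]].
- by left.
- by right; exists e; rewrite heps2_ni.
- by left.
- by right; exists y; rewrite heps2_y.
Qed.

Lemma proj2_Hcol (c : coloring G1) (d : coloring G2) (f : coloring HG) :
  Hcol c d f -> exists p, proj heps2 f = pcol p d.
Proof.
move=> [p [Hp Hf]]; exists p; apply/ffunP => e; rewrite !ffunE.
case: (e =P y) => [->|/eqP H]; first by rewrite heps2_y Hf Hp.
by rewrite (heps2_ni H) Hf.
Qed.

Lemma hpsi2_ok (c : coloring G1) (f : coloring HG) a b :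
  proper_coloring c -> proper_coloring f -> a != b ->
  psi_ok heps2 f a b (fun s => inr s).
Proof.
move=> Hc Hf Hab e He.
have Hsym := @kconnect_sym _ f a b.
case: (e =P y) => [Hey|/eqP H].
  subst e; rewrite heps2_y in He *.
  have Hcn := cutH_conn Hc Hf Hab He.
  have H21 : connect (kadj f a b) (inr s21) (inl s11).
    by apply: connect1; rewrite kadj_sym; apply: (kadj_ends He).
  have H22 : connect (kadj f a b) (inr s22) (inl s11).
    have He' : f (inr true) \in [:: a; b] by rewrite (cutH_same Hc Hf).
    apply: connect_trans (connect1 _) _; first by rewrite kadj_sym; apply: (kadj_ends He').
    by rewrite Hsym.
  by case: Hy => -> /=; split.
rewrite (heps2_ni H) in He *; split; first by apply: connect0.
by apply: connect1; rewrite kadj_sym; apply: (kadj_ends He).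
Qed.

Lemma H_main (c1 c2 : coloring G1) (d1 d2 : coloring G2) (f1 f2 : coloring HG) :
  proper_coloring c1 -> proper_coloring d1 ->
  Hcol c1 d1 f1 -> Hcol c2 d2 f2 -> kequiv f1 f2 -> kequiv c1 c2 /\ kequiv d1 d2.
Proof.
move=> Hc Hd Hy1 Hy2 Hk.
have Hf1 := Hproper Hc Hd Hy1.
split.
  rewrite -(proj1_Hcol Hy1) -(proj1_Hcol Hy2).
  apply: (proj_kequiv Hheps1 Hhphi1) => // f a b Hf Hab.
  by exists (fun s => inl s); apply: (hpsi1_ok Hc Hf Hab).
have [p1 Hp1] := proj2_Hcol Hy1.
have [p2 Hp2] := proj2_Hcol Hy2.
have H : kequiv (pcol p1 d1) (pcol p2 d2).
  rewrite -Hp1 -Hp2; apply: (proj_kequiv Hheps2 Hhphi2) => // f a b Hf Hab.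
  by exists (fun s => inr s); apply: (hpsi2_ok Hc Hf Hab).
apply: kequiv_trans (perm_equiv d1 p1) _; apply: kequiv_trans H _.
apply: kequiv_sym; exact: perm_equiv.
Qed.

End H.

Theorem lemma11 (G1 G2 : mgraph) :
  cubic G1 -> cubic G2 -> colorable3 G1 -> colorable3 G2 ->
  (forall (v1 : vert G1) (v2 : vert G2)
          (x : 'I_3 -> edge G1) (y : 'I_3 -> edge G2),
     injective x -> (forall j, incident v1 (x j)) ->
     injective y -> (forall j, incident v2 (y j)) ->
     forall (c1 c2 : coloring G1) (d1 d2 : coloring G2)
            (f1 f2 : coloring (Ygraph v1 v2 x y)),
       proper_coloring c1 -> proper_coloring c2 -> proper_coloring d1 -> proper_coloring d2 ->
       Ycol c1 d1 f1 -> Ycol c2 d2 f2 ->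
       kequiv f1 f2 -> kequiv c1 c2 /\ kequiv d1 d2) /\
  (forall (x : edge G1) (y : edge G2)
          (s11 s12 : vert G1) (s21 s22 : vert G2),
     (ends x = (s11, s12) \/ ends x = (s12, s11)) ->
     (ends y = (s21, s22) \/ ends y = (s22, s21)) ->
     forall (c1 c2 : coloring G1) (d1 d2 : coloring G2)
            (f1 f2 : coloring (Hgraph x y s11 s12 s21 s22)),
       proper_coloring c1 -> proper_coloring c2 -> proper_coloring d1 -> proper_coloring d2 ->
       Hcol c1 d1 f1 -> Hcol c2 d2 f2 ->
       kequiv f1 f2 -> kequiv c1 c2 /\ kequiv d1 d2).
Proof.
move=> Hc1 Hc2 _ _; split.
- move=> v1 v2 x y Hx Hxi Hy Hyi c1 c2 d1 d2 f1 f2 Hp1 _ Hq1 _ H1 H2 Hk.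
  eapply Y_main; eassumption.
- move=> x y s11 s12 s21 s22 Hx Hy c1 c2 d1 d2 f1 f2 Hp1 _ Hq1 _ H1 H2 Hk.
  eapply H_main; eassumption.
Qed.
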